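(* Let $G$ be a topological group such that $G^{\omega}$ is selectively pseudocompact. Then $G^{\kappa}$ is selectively pseudocompact for every cardinal $\kappa \geq \omega$.
   Context: All topological groups are Hausdorff. A space $X$ is selectively pseudocompact if for every sequence $\{U_n:n\in\omega\}$ of nonempty open subsets of $X$ there are points $x_n\in U_n$ ($n\in\omega$) such that the sequence $\{x_n:n\in\omega\}$ has an accumulation point in $X$ (equivalently, there are $x\in X$ and a free ultrafilter $p$ on $\omega$ with $x=p\text{-}\lim_n x_n$, i.e. $\{n: x_n\in U\}\in p$ for every neighbourhood $U$ of $x$). Powers carry the product topology. *)

(* Defs.v *)
From HB Require Import structures.
From mathcomp Require Import all_boot all_order all_algebra.
From mathcomp Require Import all_classical all_reals topology.
Set Implicit Arguments. Unset Strict Implicit. Unset Printing Implicit Defensive.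
Local Open Scope classical_set_scope.

Definition is_topological_group (G : topologicalType)
    (mul : G -> G -> G) (inv : G -> G) (e : G) : Prop :=
  [/\ (forall x y z, mul x (mul y z) = mul (mul x y) z),
      (forall x, mul e x = x /\ mul x e = x),
      (forall x, mul (inv x) x = e /\ mul x (inv x) = e),
      continuous (fun p : G * G => mul p.1 p.2) /\ continuous inv &
      hausdorff_space G].

Definition seq_accumulation_point (X : topologicalType) (s : nat -> X) (x : X) :=
  forall V : set X, nbhs x V -> infinite_set [set n | V (s n)].

Definition selectively_pseudocompact (X : topologicalType) : Prop :=
  forall U : nat -> set X, (forall n, open (U n) /\ U n !=set0) ->
    exists s : nat -> X, (forall n, U n (s n)) /\
      exists x : X, seq_accumulation_point s x.

(* Main.v *)
Require Import Defs.
From HB Require Import structures.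
From mathcomp Require Import all_boot all_order all_algebra.
From mathcomp Require Import all_classical all_reals topology.
Set Implicit Arguments. Unset Strict Implicit.
Local Open Scope classical_set_scope.

Lemma ptws_cvg (I : Type) (G : topologicalType) (F : set_system {ptws I -> G})
  (f : {ptws I -> G}) : Filter F ->
  (forall i, (fun g : I -> G => g i) @ F --> f i) -> F --> f.
Proof.
move=> FF H.
apply/cvg_sup => i.
move=> A /= [_ [[B Bop <-] Bfs sBfA]].
apply: (filterS sBfA); apply: (H i).
by apply: open_nbhs_nbhs.
Qed.

Definition fin_det (I : Type) (G : Type) (z : I -> G) : set_system (I -> G) :=
  [set W | exists F : set I, finite_set F /\
     forall w, (forall i, F i -> w i = z i) -> W w].

Lemma fin_det_filter (I : Type) (G : Type) (z : I -> G) : Filter (fin_det z).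
Proof.
constructor.
- by exists set0; split; [exact: finite_set0|].
- move=> A B [F [fF HF]] [F' [fF' HF']]; exists (F `|` F'); split.
    by rewrite finite_setU.
  by move=> w Hw; split; [apply: HF => i Fi|apply: HF' => i Fi];
     apply: Hw; [left|right].
- move=> P Q PQ [F [fF HF]]; exists F; split => // w Hw; exact/PQ/HF.
Qed.

Lemma nbhs_fin_det (I : Type) (G : topologicalType) (z : {ptws I -> G}) W :
  nbhs z W -> fin_det (z : I -> G) W.
Proof.
have FF := fin_det_filter (z : I -> G).
have : fin_det (z : I -> G) --> z.
  apply: ptws_cvg => i A Ai /=.
  exists [set i]; split; first exact: finite_set1.
  by move=> w Hw; rewrite /= Hw //; exact: nbhs_singleton.
by apply.
Qed.

Lemma recode_continuous (I : Type) (G : topologicalType) (code : I -> nat) :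
  continuous (fun y : {ptws nat -> G} => (fun i => y (code i)) : {ptws I -> G}).
Proof.
move=> y; apply: ptws_cvg => [|i].
  apply: fmap_filter; exact: nbhs_filter.
exact: (@proj_continuous nat (fun _ => G) (code i) y).
Qed.

Theorem mainTheorem1 (G : topologicalType) (mul : G -> G -> G) (inv : G -> G)
    (e : G) (hG : is_topological_group mul inv e)
    (hw : selectively_pseudocompact {ptws nat -> G})
    (I : Type) (hI : infinite_set [set: I]) :
  selectively_pseudocompact {ptws I -> G}.
Proof.
move=> U HU.
have Hz : forall n, exists z : {ptws I -> G}, U n z by move=> n; exact: (HU n).2.
have [z Hz'] := choice Hz.
have HF : forall n, exists F : set I, finite_set F /\
    forall w, (forall i, F i -> w i = z n i) -> U n w.
  move=> n; apply: (@nbhs_fin_det I G (z n)); apply: open_nbhs_nbhs.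
  by split; [exact: (HU n).1 | exact: Hz'].
have [F HF'] := choice HF.
pose J := \bigcup_(n in [set: nat]) F n.
have cJ : countable J.
  apply: bigcup_countable; last by move=> n _; exact: finite_set_countable (HF' n).1.
  exact: card_leT.
have /pcard_leTP /injPex [code injc] := cJ.
pose T := fun y : {ptws nat -> G} => (fun i => y (code i)) : {ptws I -> G}.
have cT : continuous T := @recode_continuous I G code.
pose V n := T @^-1` U n.
have HV : forall n, open (V n) /\ V n !=set0.
  move=> n; split; first exact: ((continuousP _).1 cT _ (HU n).1).
  have : forall k : nat, exists g : G, forall i, J i -> code i = k -> g = z n i.
    move=> k; case: (pselect (exists i, J i /\ code i = k)) => [[i [Ji ci]]|nex].
      exists (z n i) => j Jj cj; congr (z n _).
      by apply: injc; [exact: mem_set|exact: mem_set|rewrite ci cj].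
    by exists e => i Ji ci; exfalso; apply: nex; exists i.
  move=> /choice [y Hy]; exists y; rewrite /V /T /=.
  apply: (HF' n).2 => i Fi; apply: Hy => //; by exists n.
have [s [Hs [y Hacc]]] := hw V HV.
exists (fun n => T (s n)); split; first by move=> n; exact: Hs n.
exists (T y) => W HW.
exact: (Hacc (T @^-1` W) (cT y W HW)).
Qed.
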